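(* Let $p$ be a prime and $\alpha\in\mathbb{Q}_p$ an algebraic number, and let $(b_n)$ be the sequence of partial quotients produced from $\alpha$ by Algorithm C (defined in the context), after eliminating all zero partial quotients. Then for every $n$ such that $v_p(b_n)<0$, $v_p(b_{n+1})=0$ and $v_p(b_{n+2})=0$, one has $v_p(b_{n+1}b_{n+2}+1)=0$.
   Context: Let $\mathcal{R}=\{-\frac{p-1}{2},\dots,0,\dots,\frac{p-1}{2}\}$ if $p$ is odd, and $\mathcal{R}=\{0,1\}$ if $p=2$. Every nonzero $\alpha\in\mathbb{Q}_p$ is written uniquely as $\alpha=\sum_{n\ge r}a_np^n$ with $r=v_p(\alpha)$, $a_n\in\mathcal{R}$, $a_r\ne0$. Put $s(\alpha)=\sum_{n=r}^{0}a_np^n$, $t(\alpha)=\sum_{n=r}^{-1}a_np^n$ (empty sums are $0$; $s(0)=t(0)=0$). For an algebraic $\alpha\in\mathbb{Q}_p$ whose minimal polynomial over $\mathbb{Q}$ has degree $d$, with trace $\operatorname{Tr}(\alpha)$, and $\operatorname{round}(x)$ the integer nearest to the real $x$, define $\bar s(\alpha)=\operatorname{round}\!\left(\frac{\operatorname{Tr}(\alpha)/d-s(\alpha)}{p}\right)p+s(\alpha)$ and $\bar t(\alpha)=\operatorname{round}\!\left(\operatorname{Tr}(\alpha)/d-t(\alpha)\right)+t(\alpha)$. Algorithm C: set $\alpha_0=\alpha$; for $n\ge0$ let $b_n=\bar s(\alpha_n)$ if $n\equiv0\pmod 3$ and $b_n=\bar t(\alpha_n)$ if $n\equiv1,2\pmod3$;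 if $\alpha_n=b_n$ stop, otherwise set $\alpha_{n+1}=\frac{1}{\alpha_n-b_n}$. Zero partial quotients may occur; they are eliminated from the sequence via $[\dots,b_{n-1},b_n,0,b_{n+1},b_{n+2},\dots]=[\dots,b_{n-1},b_n+b_{n+1},b_{n+2},\dots]$, and the resulting sequence is re-indexed consecutively. *)

(* Defs.v *)
(* Q_p is modelled by p-adic Cauchy sequences of rationals
   (an element of Q_p = an equivalence class of such sequences). *)
From mathcomp Require Import all_boot all_order all_algebra.
Set Implicit Arguments. Unset Strict Implicit. Unset Printing Implicit Defensive.
Import Order.TTheory GRing.Theory Num.Theory.
Local Open Scope ring_scope.

(* p-adic valuation of a nonzero rational (value 0 at 0; callers guard q != 0) *)
Definition vp (p : nat) (q : rat) : int :=
  (logn p (absz (numq q)))%:Z - (logn p (absz (denq q)))%:Z.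

Definition ord_ge (p : nat) (k : int) (q : rat) : bool := (q == 0) || (k <= vp p q).

Definition eventually (P : nat -> Prop) : Prop := exists N, forall n, (N <= n)%N -> P n.

Definition cauchy (p : nat) (x : nat -> rat) : Prop :=
  forall k : int, exists N, forall m n, (N <= m)%N -> (N <= n)%N -> ord_ge p k (x m - x n).

Definition null (p : nat) (x : nat -> rat) : Prop :=
  forall k : int, eventually (fun n => ord_ge p k (x n)).

Definition eqp (p : nat) (x y : nat -> rat) : Prop := null p (fun n => x n - y n).

Definition digit (p : nat) (d : int) : bool :=
  if p == 2%N then (0 <= d) && (d <= 1) else (2 * `|d| <= p.-1)%N.

(* sum_{n = lo}^{hi} a_n p^n  (empty if hi < lo) *)
Definition psum (p : nat) (a : int -> int) (lo hi : int) : rat :=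
  let cnt : nat := absz (hi + 1 - lo)%R in
  \sum_(i < cnt | (lo + i%:Z <= hi)%R) (a (lo + i%:Z))%:~R * (p%:R : rat) ^ (lo + i%:Z).

(* x = sum_{n >= r} a_n p^n in Q_p, with a_n in R, a_r <> 0 *)
Definition expansion (p : nat) (x : nat -> rat) (a : int -> int) (r : int) : Prop :=
  a r != 0 /\ (forall n, n < r -> a n = 0) /\ (forall n, digit p (a n)) /\
  forall k : int, exists M0 : int, forall M : int, M0 <= M ->
    eventually (fun n => ord_ge p k (x n - psum p a r M)).

Definition is_s (p : nat) (x : nat -> rat) (q : rat) : Prop :=
  (null p x /\ q = 0) \/ exists a r, expansion p x a r /\ q = psum p a r 0.
Definition is_t (p : nat) (x : nat -> rat) (q : rat) : Prop :=
  (null p x /\ q = 0) \/ exists a r, expansion p x a r /\ q = psum p a r (-1).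

Definition is_minpoly (p : nat) (x : nat -> rat) (P : {poly rat}) : Prop :=
  P \is monic /\ null p (fun n => P.[x n]) /\
  forall Q : {poly rat}, Q != 0 -> null p (fun n => Q.[x n]) -> (size P <= size Q)%N.

(* m = Tr(x)/d, d the degree; Tr(x) = - (coefficient of X^(d-1) in the minimal polynomial) *)
Definition trace_mean (p : nat) (x : nat -> rat) (m : rat) : Prop :=
  exists P, is_minpoly p x P /\ m = - P`_(size P).-2 / ((size P).-1)%:R.

(* nearest integer; ties rounded up *)
Definition round (y : rat) : int := Num.floor (y + 2^-1).

Definition sbar (p : nat) (m s : rat) : rat := (round ((m - s) / p%:R))%:~R * p%:R + s.
Definition tbar (m t : rat) : rat := (round (m - t))%:~R + t.

(* b is the i-th partial quotient computed from alpha_i = y *)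
Definition pq (p : nat) (i : nat) (y : nat -> rat) (b : rat) : Prop :=
  exists m q, trace_mean p y m /\
    if (i %% 3 == 0)%N then is_s p y q /\ b = sbar p m q else is_t p y q /\ b = tbar m q.

(* bs = [b_0; ...; b_(k-1)] is a prefix of the output of Algorithm C on x;
   if [stopped], the algorithm stops after b_(k-1) (alpha_(k-1) = b_(k-1)). *)
Definition AlgC_run (p : nat) (x : nat -> rat) (bs : seq rat) (stopped : bool) : Prop :=
  exists xs : nat -> nat -> rat,
    xs 0%N = x /\
    (forall i, (i < size bs)%N -> pq p i (xs i) (nth 0 bs i)) /\
    (forall i, (i.+1 < size bs)%N ->
        ~ eqp p (xs i) (fun _ => nth 0 bs i) /\
        xs i.+1 = (fun n => (xs i n - nth 0 bs i)^-1)) /\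
    (stopped -> (0 < size bs)%N /\ eqp p (xs (size bs).-1) (fun _ => last 0 bs)).

(* one zero-elimination step: the first 0 at position >= 1 having a successor:
   [.., u, 0, v, ..] -> [.., u + v, ..] *)
Fixpoint elim_step (l : seq rat) : seq rat :=
  match l with
  | u :: l' =>
      match l' with
      | z :: v :: rest => if z == 0 then (u + v) :: rest else u :: elim_step l'
      | _ => l
      end
  | [::] => [::]
  end.

(* elimination of all zero partial quotients (each effective step shortens by 2) *)
Definition elim_zeros (l : seq rat) : seq rat := iter (size l) elim_step l.

(* c is the k-th partial quotient (0-based) of the sequence obtained from the
   output of Algorithm C on x by eliminating zeros: it is the k-th entry of the
   reduced sequence for the complete output (if it stops), or for all
   sufficiently long prefixes (if it does not stop). *)
Definition elim_nth (p : nat) (x : nat -> rat) (k : nat) (c : rat) : Prop :=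
  exists N, forall bs st, AlgC_run p x bs st -> (N <= size bs)%N || st ->
    (k < size (elim_zeros bs))%N /\ nth 0 (elim_zeros bs) k = c.

(* v_p(q) < 0 and v_p(q) = 0 (v_p(0) = +oo) *)
Definition vp_neg (p : nat) (q : rat) : Prop := q != 0 /\ vp p q < 0.
Definition vp_zero (p : nat) (q : rat) : Prop := q != 0 /\ vp p q = 0.

(* Main.v *)
Require Import Defs.
From mathcomp Require Import all_boot all_order all_algebra zify ring lra.
From Stdlib Require Import Classical IndefiniteDescription ClassicalEpsilon.
Import Order.TTheory GRing.Theory Num.Theory.
Local Open Scope ring_scope.
Section VP.
Variable p : nat.
Hypothesis pp : prime p.
Local Notation P := (p%:R : rat).
Definition nd (a : int) := ~~ (p %| `|a|)%N.

Lemma P_neq0 : P != 0.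
Proof. by rewrite pnatr_eq0 -lt0n prime_gt0. Qed.

Lemma nd_neq0 {a} : nd a -> a != 0.
Proof. by apply: contra => /eqP ->; rewrite dvdn0. Qed.

Lemma nd_neq0r {a} : nd a -> (a%:~R : rat) != 0.
Proof. by move=> /nd_neq0; rewrite intr_eq0. Qed.

Lemma ndM {a b} : nd a -> nd b -> nd (a*b).
Proof. by rewrite /nd abszM Euclid_dvdM // => /negbTE -> /negbTE ->. Qed.

Lemma nd1 : nd 1.
Proof. by rewrite /nd /= dvdn1; case: p pp => [|[|]]. Qed.

Lemma ndN {a} : nd a -> nd (- a).
Proof. by rewrite /nd abszN. Qed.

Lemma PexpE (e1 e2 : nat) : P ^ (e1%:Z - e2%:Z) = P ^+ e1 / P ^+ e2.
Proof. by rewrite expfzDr ?P_neq0 // exprnN exprnP. Qed.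

Lemma natzR (n : nat) : (n%:Z)%:~R = n%:R :> rat.
Proof. by []. Qed.

Lemma vp_rep {q} : q != 0 -> exists a b, nd a /\ nd b /\ q = P ^ (vp p q) * (a%:~R / b%:~R).
Proof.
move=> q0.
have hn : (0 < `|numq q|)%N by rewrite absz_gt0 numq_eq0.
have hd : (0 < `|denq q|)%N by rewrite absz_gt0 denq_eq0.
case: (pfactor_coprime pp hn) => m1 cm1 e1.
case: (pfactor_coprime pp hd) => m2 cm2 e2.
exists ((-1) ^+ (numq q < 0)%R * m1%:Z)%R, m2%:Z; split; last split.
- by rewrite /nd abszM absz_sign mul1n -prime_coprime.
- by rewrite /nd -prime_coprime.
rewrite /vp PexpE.
set E1 := logn p _; set E2 := logn p _; set s := (numq q < 0)%R.
have hnum : numq q = (-1) ^+ s * (m1 * p ^ E1)%N%:Z.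
  by rewrite -e1 -intEsign.
have hden : denq q = (m2 * p ^ E2)%N%:Z.
  by rewrite -e2 gez0_abs // ltW // denq_gt0.
rewrite -[q in LHS]divq_num_den hnum hden.
rewrite !intrM !natzR !natrM !natrX.
have hm2 : (m2%:R : rat) != 0.
  by rewrite pnatr_eq0; apply/eqP=> h; move: cm2; rewrite h /coprime gcdn0; case: p pp => [|[|]].
have hP := P_neq0.
field. by rewrite hm2 expf_neq0.
Qed.

Lemma rep_lt {k v : int} {a b a' b'} : (k < v)%R -> nd a -> nd b -> nd a' -> nd b' ->
  P ^ k * (a%:~R / b%:~R) = P ^ v * (a'%:~R / b'%:~R) -> False.
Proof.
move=> kv na nb na' nb'.
have [n hn] : exists n : nat, v = k + n.+1%:Z.
  by exists (absz (v - k - 1)%R); lia.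
rewrite hn expfzDr ?P_neq0 // -mulrA => /(mulfI (expfz_neq0 k P_neq0)).
have b0 := nd_neq0r nb; have b0' := nd_neq0r nb'.
move=> /(congr1 (fun x => x * (b%:~R * b'%:~R))).
rewrite mulrA divfK // -exprnP.
have -> : P ^+ n.+1 * (a'%:~R / b'%:~R) * (b%:~R * b'%:~R) = P ^+ n.+1 * a'%:~R * b%:~R.
  by field.
rewrite -natrX -natzR -!intrM => /intr_inj /(congr1 absz).
rewrite !abszM /= => h.
have : (p %| `|a| * `|b'|)%N by rewrite h dvdn_mulr // dvdn_mulr // dvdn_exp.
by rewrite Euclid_dvdM //; move: na nb'; rewrite /nd; case: (p %| _)%N; case: (p %| _)%N.
Qed.

Lemma vp_uniq (k : int) a b : nd a -> nd b -> vp p (P ^ k * (a%:~R / b%:~R)) = k.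
Proof.
move=> na nb.
have q0 : P ^ k * (a%:~R / b%:~R) != 0.
  by rewrite mulf_neq0 ?expfz_neq0 ?P_neq0 // mulf_neq0 ?invr_eq0 ?nd_neq0r.
have [a' [b' [na' [nb' e]]]] := vp_rep q0.
case: (ltrgtP k (vp p (P ^ k * (a%:~R / b%:~R)))) => // h.
- by case: (rep_lt h na nb na' nb' e).
- by case: (rep_lt h na' nb' na nb (esym e)).
Qed.

Lemma nat_split {k v : int} : (k <= v)%R -> exists n : nat, v = k + n%:Z.
Proof. by move=> h; exists (absz (v - k)%R); lia. Qed.

Lemma ndX_dec {c : int} : c != 0 -> exists e m, nd m /\ c = (p ^ e)%N%:Z * m.
Proof.
move=> c0.
have hc : (0 < `|c|)%N by rewrite absz_gt0.
case: (pfactor_coprime pp hc) => m cm e.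
exists (logn p `|c|), ((-1) ^+ (c < 0)%R * m%:Z); split.
  by rewrite /nd abszM absz_sign mul1n -prime_coprime.
move: e; set E := logn p _ => e.
rewrite [LHS]intEsign e PoszM; ring.
Qed.

Lemma ord_geP k q : ord_ge p k q <-> exists c b : int, nd b /\ q = P ^ k * (c%:~R / b%:~R).
Proof.
split.
- rewrite /ord_ge; case: eqP => [-> _|/eqP q0 /= hk].
    by exists 0, 1; split; [exact: nd1| rewrite mul0r mulr0].
  have [a [b [na [nb e]]]] := vp_rep q0.
  have [n hn] := nat_split hk.
  exists ((p ^ n)%N%:Z * a), b; split => //.
  rewrite {1}e hn expfzDr ?P_neq0 // intrM natzR natrX exprnP; ring.
- move=> [c [b [nb ->]]]; rewrite /ord_ge.
  have [->|c0] := eqVneq c 0; first by rewrite mul0r mulr0 eqxx.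
  have [e [m [nm ->]]] := ndX_dec c0.
  have -> : P ^ k * (((p ^ e)%N%:Z * m)%:~R / b%:~R) = P ^ (k + e%:Z) * (m%:~R / b%:~R).
    by rewrite expfzDr ?P_neq0 // intrM natzR natrX exprnP; ring.
  by rewrite vp_uniq // lerDl orbT.
Qed.

Lemma ord_ge0 k : ord_ge p k 0.
Proof. by rewrite /ord_ge eqxx. Qed.

Lemma ord_geD {k x y }: ord_ge p k x -> ord_ge p k y -> ord_ge p k (x + y).
Proof.
move=> /ord_geP [c [b [nb ->]]] /ord_geP [c' [b' [nb' ->]]].
apply/ord_geP; exists (c * b' + c' * b), (b * b'); split; first exact: ndM.
have := nd_neq0r nb; have := nd_neq0r nb' => h1 h2.
rewrite !intrM intrD !intrM; field; by rewrite h1 h2.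
Qed.

Lemma ord_geN {k x }: ord_ge p k x -> ord_ge p k (- x).
Proof.
move=> /ord_geP [c [b [nb ->]]]; apply/ord_geP; exists (- c), b; split => //.
rewrite intrN; ring.
Qed.

Lemma ord_geB {k x y }: ord_ge p k x -> ord_ge p k y -> ord_ge p k (x - y).
Proof. by move=> hx hy; apply: ord_geD hx (ord_geN hy). Qed.

Lemma ord_geM {k l x y }: ord_ge p k x -> ord_ge p l y -> ord_ge p (k + l) (x * y).
Proof.
move=> /ord_geP [c [b [nb ->]]] /ord_geP [c' [b' [nb' ->]]].
apply/ord_geP; exists (c * c'), (b * b'); split; first exact: ndM.
have := nd_neq0r nb; have := nd_neq0r nb' => h1 h2.
rewrite expfzDr ?P_neq0 // !intrM; field; by rewrite h1 h2.
Qed.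

Lemma ord_ge_le {k l x }: (l <= k)%R -> ord_ge p k x -> ord_ge p l x.
Proof.
rewrite /ord_ge => hlk /orP [->//|h]; apply/orP; right; exact: le_trans h.
Qed.

Lemma ord_ge_int (z : int) : ord_ge p 0 (z%:~R).
Proof. by apply/ord_geP; exists z, 1; split; [exact: nd1| rewrite expr0z mul1r divr1]. Qed.

Lemma ord_geP_k k : ord_ge p k (P ^ k).
Proof. by apply/ord_geP; exists 1, 1; split; [exact: nd1| rewrite divr1 ?mulr1]. Qed.

Definition vpe k q := q != 0 /\ vp p q = k.

Lemma vpeP k q : vpe k q <-> exists a b, nd a /\ nd b /\ q = P ^ k * (a%:~R / b%:~R).
Proof.
split.
- move=> [q0 <-]; exact: vp_rep.
- move=> [a [b [na [nb ->]]]]; split; last exact: vp_uniq.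
  by rewrite mulf_neq0 ?expfz_neq0 ?P_neq0 // mulf_neq0 ?invr_eq0 ?nd_neq0r.
Qed.

Lemma vpe_ord {k q }: vpe k q -> ord_ge p k q.
Proof. by move=> [_ h]; rewrite /ord_ge h lexx orbT. Qed.

Lemma vpe_neq0 {k q }: vpe k q -> q != 0.
Proof. by case. Qed.

Lemma vpe_not {k q }: vpe k q -> ~ ord_ge p (k + 1) q.
Proof.
move=> [q0 h]; rewrite /ord_ge (negbTE q0) /= h => hk.
lia.
Qed.

Lemma ord_ge_vp {k q }: q != 0 -> ord_ge p k q -> (k <= vp p q)%R.
Proof. by rewrite /ord_ge => /negbTE ->. Qed.

Lemma vpe_addr {k x y }: vpe k x -> ord_ge p (k + 1) y -> vpe k (x + y).
Proof.
move=> /vpeP [a [b [na [nb ->]]]] /ord_geP [c [d [nd' ->]]].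
apply/vpeP; exists (a * d + p%:Z * c * b), (b * d); split; last split.
- rewrite /nd; apply/negP => h.
  have h1 : (p%:Z %| a * d + p%:Z * c * b)%Z by rewrite dvdzE.
  have h2 : (p%:Z %| p%:Z * c * b)%Z by rewrite dvdzE !abszM dvdn_mulr ?dvdn_mulr.
  have h3 : (p%:Z %| a * d)%Z.
    have -> : a * d = (a * d + p%:Z * c * b) - p%:Z * c * b by ring.
    exact: rpredB.
  move: h3; rewrite dvdzE /=; apply/negP.
  exact: (ndM na nd').
- exact: ndM.
- have := nd_neq0r nb; have := nd_neq0r nd' => h1 h2.
  rewrite expfzDr ?P_neq0 // expr1z !intrM intrD !intrM natzR; field; by rewrite h1 h2.
Qed.

Lemma vpeM {k l x y }: vpe k x -> vpe l y -> vpe (k + l) (x * y).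
Proof.
move=> /vpeP [a [b [na [nb ->]]]] /vpeP [a' [b' [na' [nb' ->]]]].
apply/vpeP; exists (a * a'), (b * b'); split; [exact: ndM| split; [exact: ndM|]].
have := nd_neq0r nb; have := nd_neq0r nb' => h1 h2.
rewrite expfzDr ?P_neq0 // !intrM; field; by rewrite h1 h2.
Qed.

Lemma vpeV {k x }: vpe k x -> vpe (- k) (x^-1).
Proof.
move=> /vpeP [a [b [na [nb ->]]]].
apply/vpeP; exists b, a; split => //; split => //.
have := nd_neq0r na; have := nd_neq0r nb => h1 h2.
rewrite -invr_expz invfM invf_div //.
Qed.

Lemma vpeN {k x }: vpe k x -> vpe k (- x).
Proof. move=> [x0 h]; split; first by rewrite oppr_eq0. by rewrite -h /vp numqN denqN abszN. Qed.

Lemma vpe_Pk k : vpe k (P ^ k).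
Proof. by apply/vpeP; exists 1, 1; split; [exact: nd1| split; [exact: nd1| rewrite divr1 ?mulr1]]. Qed.

Lemma vpe_nd {a : int} : nd a -> vpe 0 (a%:~R).
Proof. by move=> na; apply/vpeP; exists a, 1; split => //; split; [exact: nd1| rewrite expr0z mul1r divr1]. Qed.

Lemma ord_ge_intP {z : int} {e : nat} : ord_ge p e%:Z (z%:~R) -> (p ^ e %| `|z|)%N.
Proof.
rewrite /ord_ge intr_eq0; have [-> _|z0 /=] := eqVneq z 0; first by rewrite dvdn0.
rewrite /vp numq_int denq_int /= logn1 subr0 lez_nat => h.
by rewrite pfactor_dvdn // absz_gt0.
Qed.


Lemma ev_and {A B : nat -> Prop} : eventually A -> eventually B -> eventually (fun n => A n /\ B n).
Proof.
move=> [N1 h1] [N2 h2]; exists (maxn N1 N2) => n hn; split.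
  by apply: h1; apply: leq_trans hn; apply: leq_maxl.
by apply: h2; apply: leq_trans hn; apply: leq_maxr.
Qed.

Lemma ev_mono {A B : nat -> Prop} : (forall n, A n -> B n) -> eventually A -> eventually B.
Proof. by move=> h [N hN]; exists N => n /hN /h. Qed.

Lemma ev_ex {A : nat -> Prop} : eventually A -> exists n, A n.
Proof. by move=> [N hN]; exists N; apply: hN. Qed.

Lemma ev_true (A : nat -> Prop) : (forall n, A n) -> eventually A.
Proof. by move=> h; exists 0%N. Qed.

Definition vpseq (y : nat -> rat) r := eventually (fun n => vpe r (y n)).

Lemma nonnull_vpseq {y} : cauchy p y -> ~ null p y -> exists r, vpseq y r.
Proof.
move=> cy /not_all_ex_not [k hk].
have [N hN] := cy k.
have [n0 hn0] : exists n0, (N <= n0)%N /\ ~ ord_ge p k (y n0).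
  apply: NNPP => hne; apply: hk; exists N => n hn; apply: NNPP => hno.
  by apply: hne; exists n.
case: hn0 => hNn0 hno.
have y0 : y n0 != 0 by apply/negP => /eqP e; apply: hno; rewrite e ord_ge0.
have hr : (vp p (y n0) < k)%R.
  by rewrite ltNge; apply/negP => h; apply: hno; rewrite /ord_ge h orbT.
exists (vp p (y n0)); exists N => n hn.
have -> : y n = y n0 + (y n - y n0) by ring.
apply: vpe_addr; first by [].
apply: ord_ge_le (hN _ _ hn hNn0); lia.
Qed.

Lemma vpseq_ord {y r k} : vpseq y r -> eventually (fun n => ord_ge p k (y n)) -> (k <= r)%R.
Proof.
move=> h1 h2; have [n [[y0 e] o]] := ev_ex (ev_and h1 h2).
by rewrite -e; apply: ord_ge_vp.
Qed.

Lemma vpseq_notnull {y r} : vpseq y r -> ~ null p y.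
Proof.
move=> h hn; have [n [hv ho]] := ev_ex (ev_and h (hn (r + 1))).
exact: vpe_not hv ho.
Qed.

Lemma vpseq_inv {y r} : vpseq y r -> vpseq (fun n => (y n)^-1) (- r).
Proof. by apply: ev_mono => n; apply: vpeV. Qed.

Lemma vpseq_add y d r : vpseq y r -> eventually (fun n => ord_ge p (r + 1) (d n)) ->
  vpseq (fun n => y n + d n) r.
Proof. move=> h1 h2; apply: ev_mono (ev_and h1 h2) => n [a b]; exact: vpe_addr. Qed.

Lemma vpseqM y z r s : vpseq y r -> vpseq z s -> vpseq (fun n => y n * z n) (r + s).
Proof. move=> h1 h2; apply: ev_mono (ev_and h1 h2) => n [a b]; exact: vpeM. Qed.

Lemma cauchy_inv {y r} : cauchy p y -> vpseq y r -> cauchy p (fun n => (y n)^-1).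
Proof.
move=> cy [N2 h2] k.
have [N1 h1] := cy (k + r + r).
exists (maxn N1 N2) => m n hm hn.
have hm1 : (N1 <= m)%N by apply: leq_trans hm; apply: leq_maxl.
have hn1 : (N1 <= n)%N by apply: leq_trans hn; apply: leq_maxl.
have hm2 : (N2 <= m)%N by apply: leq_trans hm; apply: leq_maxr.
have hn2 : (N2 <= n)%N by apply: leq_trans hn; apply: leq_maxr.
have vm := h2 _ hm2; have vn := h2 _ hn2.
have ym := vpe_neq0 vm; have yn := vpe_neq0 vn.
have -> : (y m)^-1 - (y n)^-1 = (y n - y m) * ((y m)^-1 * (y n)^-1).
  by field; rewrite ym yn.
have -> : k = (k + r + r) + (- r + - r) by ring.
apply: ord_geM; first exact: h1.
exact: vpe_ord (vpeM (vpeV vm) (vpeV vn)).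
Qed.

Lemma cauchy_subc {y} b : cauchy p y -> cauchy p (fun n => y n - b).
Proof.
move=> cy k; have [N hN] := cy k; exists N => m n hm hn.
have -> : y m - b - (y n - b) = y m - y n by ring.
exact: hN.
Qed.

Lemma vpseq_uniq {y r r'} : vpseq y r -> vpseq y r' -> r = r'.
Proof. by move=> h1 h2; have [n [[_ e1] [_ e2]]] := ev_ex (ev_and h1 h2); rewrite -e1 -e2. Qed.

Lemma psum_wide (a : int -> int) (lo hi : int) N : (absz (hi + 1 - lo)%R <= N)%N ->
  psum p a lo hi = \sum_(i < N | (lo + i%:Z <= hi)%R) (a (lo + i%:Z))%:~R * P ^ (lo + i%:Z).
Proof.
move=> hN; rewrite /psum (big_ord_widen_cond _ (fun i : nat => (lo + i%:Z <= hi)%R)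
  (fun i : nat => (a (lo + i%:Z))%:~R * P ^ (lo + i%:Z)) hN).
apply: eq_bigl => i /=; case h: (lo + _ <= hi)%R => //=; apply/idP; lia.
Qed.

Lemma ord_ge_sum k (I : Type) (s : seq I) (Q : pred I) (F : I -> rat) :
  (forall i, Q i -> ord_ge p k (F i)) -> ord_ge p k (\sum_(i <- s | Q i) F i).
Proof.
move=> h; apply: (big_ind (fun x => ord_ge p k x)); [exact: ord_ge0| move=> x y; exact: ord_geD| exact: h].
Qed.

Lemma ord_ge_term k (z : int) (j : int) : (k <= j)%R -> ord_ge p k (z%:~R * P ^ j).
Proof.
move=> hkj; apply: (ord_ge_le (k := 0 + j)); first by rewrite add0r.
exact: ord_geM (ord_ge_int z) (ord_geP_k j).
Qed.

Lemma psum_diff a r M M' : (M' <= M)%R -> ord_ge p (M' + 1) (psum p a r M - psum p a r M').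
Proof.
move=> hM.
set N := maxn (absz (M + 1 - r)%R) (absz (M' + 1 - r)%R).
rewrite (psum_wide a r M N (leq_maxl _ _)) (psum_wide a r M' N (leq_maxr _ _)).
rewrite (bigID (fun i : 'I_N => (r + (nat_of_ord i)%:Z <= M')%R)) /=.
have -> : \sum_(i < N | ((r + i%:Z <= M)%R && (r + i%:Z <= M')%R)) (a (r + i%:Z))%:~R * P ^ (r + i%:Z)
   = \sum_(i < N | (r + i%:Z <= M')%R) (a (r + i%:Z))%:~R * P ^ (r + i%:Z).
  apply: eq_bigl => i; case h: (_ <= M')%R; rewrite ?andbT ?andbF //; apply/idP; lia.
rewrite addrAC subrr add0r; apply: ord_ge_sum => i /andP [_ hi].
apply: ord_ge_term; lia.
Qed.

Lemma psum_ord a r M : ord_ge p r (psum p a r M).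
Proof. rewrite /psum; apply: ord_ge_sum => i _; apply: ord_ge_term; lia. Qed.

Lemma psum_lt a r M : (M < r)%R -> psum p a r M = 0.
Proof. move=> h; rewrite /psum big1 // => i hi; exfalso; lia. Qed.

Lemma psum_rr a r : psum p a r r = (a r)%:~R * P ^ r.
Proof.
rewrite /psum; have -> : absz (r + 1 - r)%R = 1%N by lia.
rewrite big_mkcond big_ord1 /= addr0 lexx; done.
Qed.

Lemma digit_nd {d} : digit p d -> d != 0 -> nd d.
Proof.
rewrite /digit /nd => hd d0; apply/negP => hp.
have hd0 : (0 < `|d|)%N by rewrite absz_gt0.
have := dvdn_leq hd0 hp.
case: eqP hd => [-> | hp2] hd; first by move=> h; move: hd h d0; lia.
have := prime_gt1 pp; move: hd; lia.
Qed.

Lemma psum_vpe a r M : a r != 0 -> digit p (a r) -> (r <= M)%R -> vpe r (psum p a r M).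
Proof.
move=> ar0 dr hM.
have -> : psum p a r M = psum p a r r + (psum p a r M - psum p a r r) by ring.
apply: vpe_addr; last exact: psum_diff.
rewrite psum_rr -[r in vpe r _]add0r; apply: vpeM (vpe_Pk r).
exact: vpe_nd (digit_nd dr ar0).
Qed.

Lemma exp_approx {y a r} M : expansion p y a r ->
  eventually (fun n => ord_ge p (M + 1) (y n - psum p a r M)).
Proof.
move=> [_ [_ [_ happ]]].
have [M0 hM0] := happ (M + 1).
set M1 : int := (absz M0 + absz M)%N%:Z.
have h1 : (M0 <= M1)%R by rewrite /M1; lia.
have h2 : (M <= M1)%R by rewrite /M1; lia.
apply: ev_mono (hM0 _ h1) => n hn.
have -> : y n - psum p a r M = (y n - psum p a r M1) + (psum p a r M1 - psum p a r M) by ring.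
apply: ord_geD hn _; exact: psum_diff.
Qed.

Lemma exp_vpseq {y a r} : expansion p y a r -> vpseq y r.
Proof.
move=> he; have [ar0 [_ [hd _]]] := he.
have := exp_approx r he; apply: ev_mono => n hn.
have -> : y n = psum p a r r + (y n - psum p a r r) by ring.
apply: vpe_addr hn; apply: psum_vpe => //.
Qed.

Lemma null_ord y k : null p y -> eventually (fun n => ord_ge p k (y n)).
Proof. by move=> h; apply: h. Qed.

Lemma sbar_diff m s : ord_ge p 1 (sbar p m s - s).
Proof.
rewrite /sbar addrK; have := ord_ge_term 1 (round ((m - s) / P)) 1 (lexx _).
by rewrite expr1z.
Qed.

Lemma tbar_diff m s : ord_ge p 0 (tbar m s - s).
Proof. by rewrite /tbar addrK; apply: ord_ge_int. Qed.

Lemma step_s1 y q m : is_s p y q -> eventually (fun n => ord_ge p 1 (y n - sbar p m q)).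
Proof.
case=> [[hn ->]|[a [r [he ->]]]].
- apply: ev_mono (hn 1) => n hy.
  have -> : y n - sbar p m 0 = y n - (sbar p m 0 - 0) by rewrite subr0.
  apply: ord_geB hy (sbar_diff _ _).
- apply: ev_mono (exp_approx 0 he) => n hy.
  have -> : y n - sbar p m (psum p a r 0) = (y n - psum p a r 0) - (sbar p m (psum p a r 0) - psum p a r 0) by ring.
  apply: ord_geB; [by rewrite add0r in hy| exact: sbar_diff].
Qed.

Lemma step_t1 y q m : is_t p y q -> eventually (fun n => ord_ge p 0 (y n - tbar m q)).
Proof.
case=> [[hn ->]|[a [r [he ->]]]].
- apply: ev_mono (hn 0) => n hy.
  have -> : y n - tbar m 0 = y n - (tbar m 0 - 0) by rewrite subr0.
  apply: ord_geB hy (tbar_diff _ _).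
- apply: ev_mono (exp_approx (-1) he) => n hy.
  have -> : y n - tbar m (psum p a r (-1)) = (y n - psum p a r (-1)) - (tbar m (psum p a r (-1)) - psum p a r (-1)) by ring.
  apply: ord_geB; [by rewrite addNr in hy| exact: tbar_diff].
Qed.

Lemma step_s2 y r q m : vpseq y r -> is_s p y q -> (r <= 0)%R -> vpe r (sbar p m q).
Proof.
move=> hv [[hn _]|[a [r' [he ->]]]]; first by case: (vpseq_notnull hv hn).
have er := vpseq_uniq (exp_vpseq he) hv; subst r'.
move=> hr; have [ar0 [_ [hd _]]] := he.
have -> : sbar p m (psum p a r 0) = psum p a r 0 + (sbar p m (psum p a r 0) - psum p a r 0) by ring.
apply: vpe_addr; first exact: psum_vpe.
apply: ord_ge_le (sbar_diff _ _); lia.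
Qed.

Lemma step_t2 y r q m : vpseq y r -> is_t p y q -> (r < 0)%R -> vpe r (tbar m q).
Proof.
move=> hv [[hn _]|[a [r' [he ->]]]]; first by case: (vpseq_notnull hv hn).
have er := vpseq_uniq (exp_vpseq he) hv; subst r'.
move=> hr; have [ar0 [_ [hd _]]] := he.
have -> : tbar m (psum p a r (-1)) = psum p a r (-1) + (tbar m (psum p a r (-1)) - psum p a r (-1)) by ring.
apply: vpe_addr; first by apply: psum_vpe => //; lia.
apply: ord_ge_le (tbar_diff _ _); lia.
Qed.

Lemma next_vp {y b j} : cauchy p y -> ~ Defs.eqp p y (fun _ => b) ->
  eventually (fun n => ord_ge p j (y n - b)) ->
  exists r', (j <= r')%R /\ vpseq (fun n => (y n - b)^-1) (- r').
Proof.
move=> cy ne hj.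
have [r' hr'] := nonnull_vpseq (cauchy_subc b cy) ne.
exists r'; split; first exact: vpseq_ord hr' hj.
exact: vpseq_inv.
Qed.

Definition P2 (a b : rat) := vpe 0 a -> vpe 0 b -> vpe 0 (a * b + 1).
Definition vpneg (a : rat) := a != 0 /\ (vp p a < 0)%R.
Definition P3 (a b c : rat) := b = 0 -> vpneg a /\ ord_ge p 0 c.

Fixpoint good (l : seq rat) : Prop :=
  match l with
  | a :: l' =>
    match l' with
    | b :: l'' => P2 a b /\ (match l'' with c :: _ => P3 a b c | [::] => True end) /\ good l'
    | [::] => True
    end
  | [::] => True
  end.

Lemma vpneg_add u v : vpneg u -> ord_ge p 0 v -> vpneg (u + v).
Proof.
move=> [u0 hu] hv.
have h : vpe (vp p u) (u + v).
  apply: vpe_addr; first by [].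
  by apply: ord_ge_le hv; lia.
by case: h => h1 h2; split => //; rewrite h2.
Qed.

Lemma vpneg_not0 {u} : vpneg u -> ~ vpe 0 u.
Proof. by move=> [_ h] [_ e]; move: h; rewrite e. Qed.

Lemma elim_head {z t} : good (z :: t) ->
  exists z' t', elim_step (z :: t) = z' :: t' /\ (z' = z \/ vpneg z').
Proof.
case: t => [|v [|w rest]] /=; try by move=> _; do 2 eexists; split; [reflexivity| left].
case: eqP => [e|ne].
  move=> [_ [h3 _]]; exists (z + w), rest; split => //; right.
  by have [h1 h2] := h3 e; apply: vpneg_add.
by move=> _; do 2 eexists; split; [reflexivity| left].
Qed.

Lemma elim_step_cons3 u z v rest : elim_step [:: u, z, v & rest] =
  if z == 0 then (u + v) :: rest else u :: elim_step [:: z, v & rest].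
Proof. by []. Qed.

Lemma elim_good l : good l -> good (elim_step l).
Proof.
elim: l => [//|u l IH].
case: l IH => [|z [|v rest]] IH //.
rewrite elim_step_cons3.
case: eqP => [e|ne].
- subst z => /= [[_ [h3 [_ [h3' hg]]]]]; clear IH.
  have hn : vpneg (u + v) by have [h1 h2] := h3 erefl; apply: vpneg_add.
  case: rest h3' hg => [|w rest'] //= h3' hg.
  split; first by move=> /(vpneg_not0 hn).
  split; last by case: hg => _ [].
  case: rest' h3' hg => [|c r] //= h3' hg ew.
  split => //; case: hg => _ [h _]; exact: (h ew).2.
- move=> hg.
  have hg' : good [:: z, v & rest] by case: hg => _ [].
  have := IH hg'.
  have [z' [t' [e hz]]] := elim_head hg'.
  rewrite e => hg''.
  rewrite /=; split; last split.
  + case: hz => [->|hn]; first by case: hg.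
    by move=> _ /(vpneg_not0 hn).
  + case: t' e hg'' => [//|c t'] _ _ ez'.
    case: hz => [ez|[hn _]]; first by rewrite ez in ez'.
    by rewrite ez' eqxx in hn.
  + exact: hg''.
Qed.

Lemma elim_zeros_good l : good l -> good (elim_zeros l).
Proof.
rewrite /elim_zeros; move: (size l) => k; elim: k => [//|k IH] h /=.
by apply: elim_good; apply: IH.
Qed.

Lemma good_nth l : good l -> forall k, (k.+1 < size l)%N -> P2 (nth 0 l k) (nth 0 l k.+1).
Proof.
elim: l => [//|a l IH].
case: l IH => [|b l] IH //= [h2 [_ hg]] [|k] hk //=.
exact: IH.
Qed.

Lemma good_of_nth l :
  (forall k, (k.+1 < size l)%N -> P2 (nth 0 l k) (nth 0 l k.+1)) ->
  (forall k, (k.+2 < size l)%N -> P3 (nth 0 l k) (nth 0 l k.+1) (nth 0 l k.+2)) ->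
  good l.
Proof.
elim: l => [//|a l IH].
case: l IH => [|b l] IH //= h2 h3.
split; first exact: (h2 0%N).
split.
  by case: l h3 {IH h2} => [//|c l] h3; exact: (h3 0%N).
apply: IH => k hk.
  exact: (h2 k.+1).
exact: (h3 k.+1).
Qed.

Lemma vpe_uniq {r s q} : vpe r q -> vpe s q -> r = s.
Proof. by move=> [_ e1] [_ e2]; rewrite -e1 -e2. Qed.

Section Run.
Variables (x : nat -> rat) (bs : seq rat) (xs : nat -> nat -> rat).
Hypothesis cx : cauchy p x.
Hypothesis hx0 : xs 0%N = x.
Hypothesis hpq : forall i, (i < size bs)%N -> pq p i (xs i) (nth 0 bs i).
Hypothesis hnext : forall i, (i.+1 < size bs)%N ->
  ~ Defs.eqp p (xs i) (fun _ => nth 0 bs i) /\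
  xs i.+1 = (fun n => (xs i n - nth 0 bs i)^-1).
Local Notation b i := (nth 0 bs i).

Lemma run_cauchy {i} : (i < size bs)%N -> cauchy p (xs i).
Proof.
elim: i => [|i IH] hi; first by rewrite hx0.
have [ne e] := hnext _ hi; rewrite e.
have ci := IH (ltnW hi).
have [r hr] := nonnull_vpseq (cauchy_subc (b i) ci) ne.
exact: cauchy_inv (cauchy_subc _ ci) hr.
Qed.

Lemma run_s1 {i} : (i < size bs)%N -> (i %% 3 == 0)%N ->
  eventually (fun n => ord_ge p 1 (xs i n - b i)).
Proof.
move=> hi h3; have [m [q [_ hif]]] := hpq _ hi; rewrite h3 in hif.
by case: hif => hs ->; apply: step_s1.
Qed.

Lemma run_t1 {i} : (i < size bs)%N -> eventually (fun n => ord_ge p 0 (xs i n - b i)).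
Proof.
move=> hi; case h3: (i %% 3 == 0)%N.
  by apply: ev_mono (run_s1 hi h3) => n; apply: ord_ge_le.
have [m [q [_ hif]]] := hpq _ hi; rewrite h3 in hif.
by case: hif => hs ->; apply: step_t1.
Qed.

Lemma run_s2 {i r} : (i < size bs)%N -> (i %% 3 == 0)%N -> vpseq (xs i) r -> (r <= 0)%R -> vpe r (b i).
Proof.
move=> hi h3 hv hr; have [m [q [_ hif]]] := hpq _ hi; rewrite h3 in hif.
by case: hif => hs ->; apply: step_s2 hv hs hr.
Qed.

Lemma run_t2 {i r} : (i < size bs)%N -> (i %% 3 != 0)%N -> vpseq (xs i) r -> (r < 0)%R -> vpe r (b i).
Proof.
move=> hi h3 hv hr; have [m [q [_ hif]]] := hpq _ hi; rewrite (negbTE h3) in hif.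
by case: hif => hs ->; apply: step_t2 hv hs hr.
Qed.

Lemma run_vp {i} : (i.+1 < size bs)%N ->
  exists r, vpseq (xs i.+1) r /\ (r <= 0)%R /\ ((i %% 3 == 0)%N -> (r < 0)%R).
Proof.
move=> hi; have [ne e] := hnext _ hi; rewrite e.
have ci := run_cauchy (ltnW hi).
case h3: (i %% 3 == 0)%N.
  have [r' [hr' hv]] := next_vp ci ne (run_s1 (ltnW hi) h3).
  by exists (- r'); split => //; split => [|_]; lia.
have [r' [hr' hv]] := next_vp ci ne (run_t1 (ltnW hi)).
by exists (- r'); split => //; split => //; lia.
Qed.

Lemma run_good : good bs.
Proof.
apply: good_of_nth.
- move=> k hk h0 h1.
  have hk0 : (k < size bs)%N by apply: ltnW.
  case E: (k %% 3)%N => [|[|[|kk]]].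
  + have [r [hv [_ hr]]] := run_vp hk.
    have := run_t2 hk (_ : (k.+1 %% 3 != 0)%N) hv (hr (introT eqP E)).
    move=> /(_ ltac:(apply/eqP; lia)) hb.
    by have := vpe_uniq hb h1; lia.
  + case: k E hk hk0 h0 h1 => [//|k'] E hk hk0 h0 h1.
    have [r [hv [_ hr]]] := run_vp hk0.
    have hb := run_t2 hk0 (_ : (k'.+1 %% 3 != 0)%N) hv (hr (_ : (k' %% 3 == 0)%N)).
    have : r = 0 by apply: vpe_uniq (hb _ _) h0; apply/eqP; lia.
    by move: (hr ltac:(apply/eqP; lia)); lia.
  + case: k E hk hk0 h0 h1 => [//|k'] E hk hk0 h0 h1.
    have [r [hv [hr0 _]]] := run_vp hk0.
    have r0 : r = 0.
      apply/eqP; rewrite eq_le hr0 /=; rewrite leNgt; apply/negP => hr.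
      have := vpe_uniq (run_t2 hk0 (_ : (k'.+1 %% 3 != 0)%N) hv hr) h0.
      by move=> /(_ ltac:(apply/eqP; lia)); lia.
    subst r.
    have [r1 [hv1 [hr1 _]]] := run_vp hk.
    have hb1 := run_s2 hk (_ : (k'.+2 %% 3 == 0)%N) hv1 hr1.
    have r10 : r1 = 0 by apply: vpe_uniq (hb1 _) h1; apply/eqP; lia.
    subst r1.
    have [ne e] := hnext _ hk.
    have hs1 := run_s1 hk (_ : (k'.+2 %% 3 == 0)%N).
    have [n [[hY hZ] hd]] := ev_ex (ev_and (ev_and hv hv1) (hs1 ltac:(apply/eqP; lia))).
    move: hZ hd; rewrite e => hZ hd.
    set Y := xs k'.+1 n in hY hZ hd *.
    have hZ0 := vpe_neq0 hZ.
    have hY0 : Y - b k'.+1 != 0 by apply: contraNneq hZ0 => ->; rewrite invr0.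
    have -> : b k'.+1 * b k'.+2 + 1 = Y * (Y - b k'.+1)^-1 + - (b k'.+1 * ((Y - b k'.+1)^-1 - b k'.+2)).
      by field.
    apply: vpe_addr.
      by rewrite -[X in vpe X _](addr0 0); apply: vpeM hY hZ.
    apply: ord_geN.
    exact: ord_geM (vpe_ord h0) hd.
  + by move: E; have := ltn_pmod k (isT : (0 < 3)%N); lia.
- move=> k hk hb.
  have hk1 : (k.+1 < size bs)%N by apply: ltnW.
  have hk0 : (k < size bs)%N by apply: ltnW.
  case E: (k %% 3)%N => [|[|[|kk]]].
  + have [r [hv [_ hr]]] := run_vp hk1.
    have := run_t2 hk1 (_ : (k.+1 %% 3 != 0)%N) hv (hr (introT eqP E)).
    move=> /(_ ltac:(apply/eqP; lia)) /vpe_neq0.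
    by rewrite hb eqxx.
  + case: k E hk hk1 hk0 hb => [//|k'] E hk hk1 hk0 hb.
    split.
      have [r [hv [_ hr]]] := run_vp hk0.
      have := run_t2 hk0 (_ : (k'.+1 %% 3 != 0)%N) hv (hr (_ : (k' %% 3 == 0)%N)).
      move=> /(_ ltac:(apply/eqP; lia) ltac:(apply/eqP; lia)) [h1 h2].
      by split => //; rewrite h2; apply: hr; apply/eqP; lia.
    have [r [hv [hr0 _]]] := run_vp hk1.
    have r0 : r = 0.
      apply/eqP; rewrite eq_le hr0 /=; rewrite leNgt; apply/negP => hr.
      have := run_t2 hk1 (_ : (k'.+2 %% 3 != 0)%N) hv hr.
      by move=> /(_ ltac:(apply/eqP; lia)) /vpe_neq0; rewrite hb eqxx.
    subst r.
    have [ne e] := hnext _ hk.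
    have hv2 : vpseq (xs k'.+3) (- 0).
      rewrite e hb; apply: vpseq_inv; apply: ev_mono hv => n; by rewrite subr0.
    have := run_s2 hk (_ : (k'.+3 %% 3 == 0)%N) hv2 (_ : (- 0 <= 0)%R).
    by move=> /(_ ltac:(apply/eqP; lia) ltac:(by rewrite oppr0)) /vpe_ord; rewrite oppr0.
  + have [r [hv [hr0 _]]] := run_vp hk1.
    have := run_s2 hk1 (_ : (k.+1 %% 3 == 0)%N) hv hr0.
    by move=> /(_ ltac:(apply/eqP; lia)) /vpe_neq0; rewrite hb eqxx.
  + by move: E; have := ltn_pmod k (isT : (0 < 3)%N); lia.
Qed.
End Run.

Lemma approx q (K : nat) : ord_ge p 0 q -> exists z : int, ord_ge p K%:Z (q - z%:~R).
Proof.
move=> /ord_geP [c [d [nd_d ->]]].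
have [u [v e]] := Bezoutz d ((p ^ K)%N%:Z).
have g1 : gcdz d ((p ^ K)%N%:Z) = 1%N.
  rewrite /gcdz /=; apply/eqP; rewrite -/(coprime _ _); apply: coprimeXr.
  by rewrite coprime_sym prime_coprime.
rewrite g1 in e.
exists (c * u); apply/ord_geP; exists (c * v), d; split => //.
have d0 := nd_neq0r nd_d.
have e' : (u%:~R * d%:~R + v%:~R * P ^+ K : rat) = 1.
  by rewrite -natrX -natzR -!intrM -intrD e.
rewrite expr0z mul1r !intrM.
have -> : P ^ K%:Z = P ^+ K by [].
have h : (1 : rat) - u%:~R * d%:~R = v%:~R * P ^+ K.
  move: e'; set A := u%:~R * d%:~R; set B := v%:~R * P ^+ K => e'.
  by rewrite -e' addrAC subrr add0r.
transitivity ((c%:~R / d%:~R * (1 - u%:~R * d%:~R)) : rat); first by field.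
rewrite h; field; done.
Qed.

Definition bal (w : int) : int :=
  if p == 2%N then (w %% 2)%Z
  else (let d := (w %% p%:Z)%Z in if (2 * d <= p%:Z - 1)%R then d else d - p%:Z).

Lemma p_gt0z : (0 < p%:Z)%R.
Proof. by rewrite ltz_nat prime_gt0. Qed.

Lemma bal_digit w : digit p (bal w).
Proof.
rewrite /digit /bal; case: eqP => [p2|pn2].
  have := modz_ge0 w (isT : (2:int) != 0); have := ltz_pmod w (isT : (0:int) < 2); lia.
have p0 : p%:Z != 0 by rewrite gt_eqF // p_gt0z.
have := modz_ge0 w p0; have := ltz_pmod w p_gt0z.
have [//|op] := even_prime pp.
have p3 : (2 < p)%N by have := prime_gt1 pp; case: p op pn2 => [|[|[|]]].
have [k hk] : exists k, p = k.*2.+1 by exists p./2; rewrite -[LHS]odd_double_half op.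
move: (w %% p%:Z)%Z => d; rewrite hk; case: ifP; lia.
Qed.

Lemma bal_dvd w : (p%:Z %| w - bal w)%Z.
Proof.
rewrite /bal; case: eqP => [p2|pn2].
  rewrite p2 {1}(divz_eq w 2) addrK; exact: dvdz_mull (dvdzz _).
case: ifP => _.
  by rewrite {1}(divz_eq w p%:Z) addrK; exact: dvdz_mull (dvdzz _).
have -> : w - ((w %% p%:Z)%Z - p%:Z) = ((w %/ p%:Z)%Z + 1) * p%:Z.
  by rewrite {1}(divz_eq w p%:Z); ring.
exact: dvdz_mull (dvdzz _).
Qed.

Lemma bal_eq {w w'} : (p%:Z %| w - w')%Z -> bal w = bal w'.
Proof.
rewrite -eqz_mod_dvd => /eqP e; rewrite /bal; case: eqP => [p2|//]; last by rewrite e.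
by move: e; rewrite p2.
Qed.

Lemma bal_nd w : nd w -> bal w != 0.
Proof.
move=> nw; apply/eqP => e; have := bal_dvd w; rewrite e subr0 dvdzE /=.
by move: nw; rewrite /nd => /negbTE ->.
Qed.

Definition rest (w : int) : int := ((w - bal w) %/ p%:Z)%Z.

Lemma restE w : w = bal w + rest w * p%:Z.
Proof. by rewrite /rest divzK ?bal_dvd //; ring. Qed.

Fixpoint dig (j : nat) (w : int) : int :=
  match j with 0%N => bal w | j'.+1 => dig j' (rest w) end.
Fixpoint restK (K : nat) (w : int) : int :=
  match K with 0%N => w | K'.+1 => restK K' (rest w) end.

Lemma dig_sum K w : (w%:~R : rat) =
  \sum_(j < K) (dig j w)%:~R * P ^+ j + (restK K w)%:~R * P ^+ K.
Proof.
elim: K w => [|K IH] w; first by rewrite big_ord0 expr0 mulr1 add0r.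
rewrite big_ord_recl /= expr0 mulr1.
have -> : \sum_(i < K) (dig (bump 0 i) w)%:~R * P ^+ bump 0 i =
   P * \sum_(i < K) (dig i (rest w))%:~R * P ^+ i.
  rewrite mulr_sumr; apply: eq_bigr => i _; rewrite /bump /= add1n exprS; ring.
rewrite {1}(restE w) intrD intrM natzR (IH (rest w)) exprS; ring.
Qed.

Lemma dig_cong j w w' : ((p%:Z) ^+ j.+1 %| w - w')%Z -> dig j w = dig j w'.
Proof.
elim: j w w' => [|j IH] w w' h.
  by apply: bal_eq; rewrite expr1 in h.
have hp : (p%:Z %| w - w')%Z.
  by apply: dvdz_trans h; rewrite exprS; apply: dvdz_mulr (dvdzz _).
rewrite /=; apply: IH.
have e : (rest w - rest w') * p%:Z = w - w'.
  by rewrite [in RHS](restE w) [in RHS](restE w') (bal_eq hp); ring.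
have p0 : p%:Z != 0 by rewrite gt_eqF // p_gt0z.
by rewrite -(dvdz_mul2r p0) e -exprSr.
Qed.

Lemma dig_digit j w : digit p (dig j w).
Proof. by elim: j w => [|j IH] w /=; [exact: bal_digit| exact: IH]. Qed.

Lemma digit0 : digit p 0.
Proof. by rewrite /digit; case: eqP. Qed.

Lemma PrV (r : int) : P ^ r * P ^ (- r) = 1.
Proof. by rewrite -expfzDr ?P_neq0 // addrN expr0z. Qed.

Lemma exp_exists {y r} : cauchy p y -> vpseq y r -> exists a, expansion p y a r.
Proof.
move=> cy hv.
have H : forall K : nat, exists z : int,
    eventually (fun n => ord_ge p (r + K%:Z) (y n - P ^ r * z%:~R)).
  move=> K; have [N1 h1] := cy (r + K%:Z); have [N2 h2] := hv.
  set n0 := maxn N1 N2.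
  have v0 := h2 n0 (leq_maxr _ _).
  have hq : ord_ge p 0 (y n0 * P ^ (- r)).
    by have := vpe_ord (vpeM v0 (vpe_Pk (- r))); rewrite addrN.
  have [z hz] := approx _ K hq.
  exists z; exists N1 => n hn.
  have -> : y n - P ^ r * z%:~R = (y n - y n0) + P ^ r * (y n0 * P ^ (- r) - z%:~R).
    rewrite mulrBr mulrCA PrV mulr1; ring.
  apply: ord_geD; first exact: h1 n n0 hn (leq_maxl _ _).
  exact: ord_geM (ord_geP_k r) hz.
pose Z K := proj1_sig (constructive_indefinite_description _ (H K)).
have hZ : forall K, eventually (fun n => ord_ge p (r + K%:Z) (y n - P ^ r * (Z K)%:~R)).
  by move=> K; rewrite /Z; case: constructive_indefinite_description.
have Zc : forall j K, (j < K)%N -> dig j (Z j.+1) = dig j (Z K).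
  move=> j K hjK; apply: dig_cong.
  have [n [h1 h2]] := ev_ex (ev_and (hZ j.+1) (hZ K)).
  have h3 : ord_ge p (r + j.+1%:Z) (P ^ r * (Z j.+1 - Z K)%:~R).
    have -> : P ^ r * (Z j.+1 - Z K)%:~R = (y n - P ^ r * (Z K)%:~R) - (y n - P ^ r * (Z j.+1)%:~R).
      rewrite intrB; ring.
    by apply: ord_geB h1; apply: ord_ge_le h2; lia.
  have h4 : ord_ge p j.+1%:Z ((Z j.+1 - Z K)%:~R).
    have := ord_geM (ord_geP_k (- r)) h3.
    by rewrite mulrA [P ^ (- r) * _]mulrC PrV mul1r; apply: ord_ge_le; lia.
  by have := ord_ge_intP h4; rewrite dvdzE abszX.
pose a (n : int) : int := if (r <= n)%R then dig (absz (n - r)%R) (Z (absz (n - r)%R).+1) else 0.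
exists a; split; [|split; [|split]].
- rewrite /a lexx subrr /=; apply: bal_nd.
  apply/negP => hdiv.
  have [n [h1 h2]] := ev_ex (ev_and hv (hZ 1%N)).
  have hdz : (p%:Z %| Z 1%N)%Z by rewrite dvdzE.
  have [t ht] := dvdzP hdz.
  apply: (vpe_not h1).
  have -> : y n = (y n - P ^ r * (Z 1%N)%:~R) + (Z 1%N)%:~R * P ^ r by ring.
  apply: ord_geD h2 _; rewrite ht intrM natzR.
  have -> : t%:~R * P * P ^ r = t%:~R * P ^ (r + 1).
    by rewrite expfzDr ?P_neq0 // expr1z; ring.
  exact: ord_ge_term.
- by move=> n hn; rewrite /a; case: ifP => // h; exfalso; lia.
- by move=> n; rewrite /a; case: ifP => _; [exact: dig_digit| exact: digit0].
- move=> k; exists ((absz k + absz r)%N%:Z) => M hM.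
  set K := absz (M - r + 1)%R.
  have hK : M + 1 = r + K%:Z by rewrite /K; lia.
  have eps : psum p a r M = P ^ r * \sum_(i < K) (dig i (Z K))%:~R * P ^+ i.
    rewrite (psum_wide a r M K); last by rewrite /K; lia.
    rewrite big_mkcond mulr_sumr; apply: eq_bigr => i _.
    have hi := ltn_ord i.
    have -> : (r + (nat_of_ord i)%:Z <= M)%R by lia.
    rewrite /a.
    have -> : (r <= r + (nat_of_ord i)%:Z)%R by lia.
    have -> : absz (r + (nat_of_ord i)%:Z - r)%R = nat_of_ord i by lia.
    rewrite (Zc _ _ hi) expfzDr ?P_neq0 // -exprnP; ring.
  apply: ev_mono (hZ K) => n hn.
  have -> : y n - psum p a r M = (y n - P ^ r * (Z K)%:~R) + (restK K (Z K))%:~R * P ^ (r + K%:Z).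
    rewrite eps {1}(dig_sum K (Z K)) expfzDr ?P_neq0 //.
    have -> : P ^ K%:Z = P ^+ K by [].
    ring.
  apply: ord_ge_le (_ : (k <= r + K%:Z)%R) _; first lia.
  apply: ord_geD hn _; exact: ord_ge_term.
Qed.

Lemma vpe1 : vpe 0 1.
Proof. by apply/vpeP; exists 1, 1; split; [exact: nd1| split; [exact: nd1| rewrite expr0z mul1r divr1]]. Qed.

Lemma vpeX {k x} n : vpe k x -> vpe (k * n%:Z) (x ^+ n).
Proof.
move=> h; elim: n => [|n IH]; first by rewrite mulr0 expr0; exact: vpe1.
rewrite exprS (_ : k * n.+1%:Z = k + k * n%:Z); last by rewrite -addn1 PoszD; ring.
exact: vpeM.
Qed.

Lemma null_scale (c : rat) (Q : {poly rat}) y :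
  null p (fun n => Q.[y n]) -> null p (fun n => (c *: Q).[y n]).
Proof.
move=> h k; have [->|c0] := eqVneq c 0.
  by apply: ev_true => n; rewrite scale0r horner0 ord_ge0.
apply: ev_mono (h (k - vp p c)) => n hn; rewrite hornerZ.
have := ord_geM (vpe_ord (conj c0 erefl : vpe (vp p c) c)) hn.
by apply: ord_ge_le; lia.
Qed.

Lemma minpoly_of y : (exists Q : {poly rat}, Q != 0 /\ null p (fun n => Q.[y n])) ->
  exists P0, is_minpoly p y P0.
Proof.
move=> [Q [Q0 hQ]].
have H : forall k (Q : {poly rat}), Q != 0 -> null p (fun n => Q.[y n]) -> (size Q <= k)%N ->
    exists Q0 : {poly rat}, Q0 != 0 /\ null p (fun n => Q0.[y n]) /\
      forall Q' : {poly rat}, Q' != 0 -> null p (fun n => Q'.[y n]) -> (size Q0 <= size Q')%N.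
  elim=> [|k IH] Q1 nQ1 hQ1 sQ1.
    by move: sQ1; rewrite leqn0 size_poly_eq0 (negbTE nQ1).
  case: (classic (exists Q2 : {poly rat}, Q2 != 0 /\ null p (fun n => Q2.[y n]) /\ (size Q2 <= k)%N)).
    by move=> [Q2 [h1 [h2 h3]]]; apply: (IH Q2).
  move=> hno; exists Q1; split => //; split => // Q' h1 h2.
  rewrite leqNgt; apply/negP => hlt; apply: hno; exists Q'; split => //; split => //.
  by move: hlt sQ1; lia.
have [Q1 [h1 [h2 h3]]] := H _ Q Q0 hQ (leqnn _).
have lc0 : lead_coef Q1 != 0 by rewrite lead_coef_eq0.
exists ((lead_coef Q1)^-1 *: Q1); split; last split.
- by rewrite monicE lead_coefZ mulVf.
- exact: null_scale.
- by move=> Q' hQ' hn; rewrite size_scale ?invr_eq0 //; apply: h3.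
Qed.

Lemma inv_poly y b r P0 : is_minpoly p y P0 -> vpseq (fun n => y n - b) r ->
  exists Q : {poly rat}, Q != 0 /\ null p (fun n => Q.[(y n - b)^-1]).
Proof.
move=> [mP [nP _]] hv.
pose d := (size P0).-1.
pose Q : {poly rat} := \sum_(i < size P0) P0`_i *: ((b%:P * 'X + 1) ^+ i * 'X ^+ (d - i)).
have sP : size P0 = d.+1 by rewrite /d prednK // size_poly_gt0 monic_neq0.
have hQ : forall z, z != 0 -> Q.[z] = z ^+ d * P0.[b + z^-1].
  move=> z z0; rewrite /Q horner_sum horner_coef mulr_sumr; apply: eq_bigr => i _.
  rewrite !hornerE.
  have hi : (i <= d)%N by rewrite -ltnS -sP.
  rewrite -{2}(subnKC hi) exprD.
  have -> : b * z + 1 = z * (b + z^-1) by field.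
  rewrite exprMn /=; ring.
exists Q; split.
- apply/negP => /eqP Qe.
  have : Q.[0] = 1.
    rewrite /Q horner_sum.
    rewrite sP big_ord_recr /= big1 ?add0r.
      rewrite !hornerE subnn expr0 /= expr1n !mulr1.
      by move/monicP: mP; rewrite lead_coefE sP.
    move=> i _; rewrite !hornerE expr0n /=.
    have -> : (d - i == 0)%N = false by have := ltn_ord i; lia.
    by rewrite /= !mulr0.
  by rewrite Qe horner0 => /eqP; rewrite eq_sym oner_eq0.
- move=> k.
  have hz := vpseq_inv hv.
  apply: ev_mono (ev_and hz (nP (k + r * d%:Z))) => n [hzn hPn].
  rewrite hQ ?(vpe_neq0 hzn) // invrK (addrC b) subrK.
  have := ord_geM (vpe_ord (vpeX d hzn)) hPn.
  by apply: ord_ge_le; rewrite (_ : - r * d%:Z + (k + r * d%:Z) = k) //; ring.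
Qed.

Lemma minpoly_inv y b : cauchy p y -> (exists P0, is_minpoly p y P0) ->
  ~ Defs.eqp p y (fun _ => b) -> exists P', is_minpoly p (fun n => (y n - b)^-1) P'.
Proof.
move=> cy [P0 hP] ne.
have [r hr] := nonnull_vpseq (cauchy_subc b cy) ne.
apply: minpoly_of; exact: inv_poly hP hr.
Qed.

Lemma pq_exists i y : cauchy p y -> (exists P0, is_minpoly p y P0) -> exists b, pq p i y b.
Proof.
move=> cy [P0 hP].
have htm : trace_mean p y (- P0`_(size P0).-2 / ((size P0).-1)%:R) by exists P0.
have [qs [qt [hs ht]]] : exists qs qt, is_s p y qs /\ is_t p y qt.
  case: (classic (null p y)) => hn.
    by exists 0, 0; split; left.
  have [r hr] := nonnull_vpseq cy hn.
  have [a ha] := exp_exists cy hr.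
  exists (psum p a r 0), (psum p a r (-1)); split; right; exists a, r; split => //.
case h3: (i %% 3 == 0)%N.
  exists (sbar p (- P0`_(size P0).-2 / ((size P0).-1)%:R) qs).
  by exists (- P0`_(size P0).-2 / ((size P0).-1)%:R), qs; rewrite h3.
exists (tbar (- P0`_(size P0).-2 / ((size P0).-1)%:R) qt).
by exists (- P0`_(size P0).-2 / ((size P0).-1)%:R), qt; rewrite h3.
Qed.

Section Build.
Variable x : nat -> rat.
Hypothesis cx : cauchy p x.
Hypothesis hmx : exists P0, is_minpoly p x P0.

Definition fb i y := epsilon (inhabits (0 : rat)) (fun b => pq p i y b).

Fixpoint ys (i : nat) : nat -> rat :=
  match i with 0%N => x | i'.+1 => fun n => (ys i' n - fb i' (ys i'))^-1 end.

Lemma ys_good {i} : (forall j, (j < i)%N -> ~ Defs.eqp p (ys j) (fun _ => fb j (ys j))) ->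
  cauchy p (ys i) /\ exists P0, is_minpoly p (ys i) P0.
Proof.
elim: i => [|i IH] h; first by split.
have [ci mi] := IH (fun j hj => h j (ltnW hj)).
have ne := h i (ltnSn i).
split.
  have [r hr] := nonnull_vpseq (cauchy_subc (fb i (ys i)) ci) ne.
  exact: cauchy_inv (cauchy_subc _ ci) hr.
exact: minpoly_inv ci mi ne.
Qed.

Lemma fb_spec i : (forall j, (j < i)%N -> ~ Defs.eqp p (ys j) (fun _ => fb j (ys j))) ->
  pq p i (ys i) (fb i (ys i)).
Proof.
move=> h; have [ci mi] := ys_good h.
rewrite /fb; apply: epsilon_spec; exact: pq_exists.
Qed.

Lemma run_exists L : exists bs st, AlgC_run p x bs st /\ (L <= size bs)%N || st.
Proof.
have H : forall L, (forall j, (j.+1 < L)%N -> ~ Defs.eqp p (ys j) (fun _ => fb j (ys j))) \/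
   (exists j, (forall j', (j' < j)%N -> ~ Defs.eqp p (ys j') (fun _ => fb j' (ys j'))) /\
       Defs.eqp p (ys j) (fun _ => fb j (ys j))).
  elim=> [|L' IH]; first by left.
  case: IH => [h|h]; last by right.
  case: L' h => [|L'] h; first by left.
  case: (classic (Defs.eqp p (ys L') (fun _ => fb L' (ys L')))) => [e|ne].
    by right; exists L'; split => // j' hj'; apply: h.
  left => j hj; case: (ltngtP j L') => [hjl|hjl|->] //.
    by apply: h.
  by exfalso; lia.
case: (H L) => [h|[j [hj he]]].
- exists (mkseq (fun i => fb i (ys i)) L), false; rewrite size_mkseq leqnn; split => //.
  exists ys; split => //; split; [|split] => //.
  + move=> i; rewrite size_mkseq => hi; rewrite nth_mkseq //.
    by apply: fb_spec => j hj; apply: h; lia.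
  + move=> i; rewrite size_mkseq => hi; rewrite nth_mkseq; last by lia.
    by split => //; apply: h.
- exists (mkseq (fun i => fb i (ys i)) j.+1), true; rewrite orbT; split => //.
  exists ys; split => //; split; [|split].
  + move=> i; rewrite size_mkseq => hi; rewrite nth_mkseq //.
    by apply: fb_spec => j' hj'; apply: hj; lia.
  + move=> i; rewrite size_mkseq => hi; rewrite nth_mkseq; last by lia.
    by split => //; apply: hj.
  + move=> _; rewrite size_mkseq; split => //.
    by rewrite -nth_last size_mkseq nth_mkseq.
Qed.
End Build.
End VP.

Theorem proposition4 (p : nat) (x : nat -> rat) :
  prime p -> cauchy p x -> (exists P, is_minpoly p x P) ->
  forall (n : nat) (c0 c1 c2 : rat),
    elim_nth p x n c0 -> elim_nth p x n.+1 c1 -> elim_nth p x n.+2 c2 ->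
    vp_neg p c0 -> vp_zero p c1 -> vp_zero p c2 ->
    vp_zero p (c1 * c2 + 1).
Proof.
move=> pp cx hmx n c0 c1 c2 _ [N1 h1] [N2 h2] _ hz1 hz2.
have [bs [st [hr hs]]] := run_exists p pp x cx hmx (maxn N1 N2).
have [s1 e1] : (n.+1 < size (elim_zeros bs))%N /\ nth 0 (elim_zeros bs) n.+1 = c1.
  apply: h1 hr _; move: hs; case: (st); rewrite ?orbT // !orbF => hs.
  by apply: leq_trans hs; apply: leq_maxl.
have [s2 e2] : (n.+2 < size (elim_zeros bs))%N /\ nth 0 (elim_zeros bs) n.+2 = c2.
  apply: h2 hr _; move: hs; case: (st); rewrite ?orbT // !orbF => hs.
  by apply: leq_trans hs; apply: leq_maxr.
have [xs [hx0 [hpq [hnext _]]]] := hr.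
have g := elim_zeros_good p pp _ (run_good p pp x bs xs cx hx0 hpq hnext).
have := good_nth p _ g n.+1 s2; rewrite e1 e2; apply; [exact: hz1| exact: hz2].
Qed.
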